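(* There exists $f\in{\rm elh}(\mathbb{C})$ such that the map $L_f:{\rm elh}(\mathbb{C})\to{\rm elh}(\mathbb{C})$, $L_f(g)=f\circ g$, is not injective.
   Context: ${\rm elh}(\mathbb{C})$ denotes the set of entire functions with nowhere vanishing derivative and derivative $1$ at $0$. *)

(* Defs.v *)
From Stdlib Require Import Reals.
From Coquelicot Require Export Coquelicot.

(* Complex derivative: Coquelicot's is_derive with scalars K = C_AbsRing
   and values in C_NormedModule, i.e. the limit of (f(w)-f(z))/(w-z), w -> z in C. *)
Definition C_is_derive (f : C -> C) (z l : C) : Prop :=
  @is_derive C_AbsRing C_NormedModule f z l.

Definition elh (f : C -> C) : Prop :=
  (forall z : C, exists l : C, C_is_derive f z l /\ l <> 0%C)
  /\ C_is_derive f 0%C 1%C.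

(* Main.v *)
Require Import Defs.
From Stdlib Require Import Reals.
From Coquelicot Require Import Coquelicot.
From Stdlib Require Import Lra.

Definition cexp (z : C) : C :=
  (exp (fst z) * cos (snd z), exp (fst z) * sin (snd z)).

Lemma cexp_add x h : cexp (x + h)%C = (cexp x * cexp h)%C.
Proof.
  destruct x as [x1 x2], h as [h1 h2]. unfold cexp, Cplus, Cmult; simpl.
  rewrite exp_plus, cos_plus, sin_plus. f_equal; ring.
Qed.

Lemma sin_lb1 a : 0 <= a -> a <= 1 -> a - a^3 <= sin a.
Proof.
  intros. destruct (pre_sin_bound a 0) as [H1 _]; try lra.
  unfold sin_approx, sin_term in H1. simpl in H1.
  assert (E: 1 * (a * 1 / 1) + -1 * 1 * (a * (a * (a * 1)) / (1 + 1 + 1 + 1 + 1 + 1)) = a - a^3/6) by field.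
  rewrite E in H1. assert (0 <= a^3) by (apply pow_le; lra). lra.
Qed.

Lemma sin_pos_bound a : 0 <= a -> a <= 1 -> Rabs (sin a - a) <= a^2.
Proof.
  intros. assert (sin a <= a).
  { destruct (Req_dec a 0) as [->|]. rewrite sin_0; lra. left; apply sin_lt_x; lra. }
  pose proof (sin_lb1 a H H0). apply Rabs_le. split; try nra.
Qed.

Lemma sin_bound' b r : Rabs b <= r -> r <= 1 -> Rabs (sin b - b) <= r^2.
Proof.
  intros Hb Hr. destruct (Rle_dec 0 b).
  - rewrite Rabs_pos_eq in Hb by lra. pose proof (sin_pos_bound b r0 ltac:(lra)).
    assert (b^2 <= r^2) by nra. lra.
  - rewrite Rabs_left in Hb by lra.
    pose proof (sin_pos_bound (-b) ltac:(lra) ltac:(lra)).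
    rewrite sin_neg in H. replace (- sin b - - b) with (- (sin b - b)) in H by ring.
    rewrite Rabs_Ropp in H. assert ((-b)^2 <= r^2) by nra. lra.
Qed.

Lemma cos_bound' b r : Rabs b <= r -> r <= 1 -> Rabs (cos b - 1) <= 2 * r^2.
Proof.
  intros Hb Hr.
  replace b with (2 * (b/2)) by field. rewrite cos_2a_sin.
  pose proof (sin_bound' (b/2) r).
  assert (Rabs (b/2) <= r).
  { unfold Rdiv. rewrite Rabs_mult. rewrite (Rabs_pos_eq (/2)) by lra. pose proof (Rabs_pos b). lra. }
  specialize (H H0 Hr).
  assert (Rabs (sin (b/2)) <= 2 * r).
  { pose proof (Rabs_triang (sin (b/2) - b/2) (b/2)).
    replace (sin (b/2) - b/2 + b/2) with (sin (b/2)) in H1 by ring.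
    assert (r^2 <= r) by (pose proof (Rabs_pos b); nra). lra. }
  replace (1 - 2 * sin (b / 2) * sin (b / 2) - 1) with (-(2 * (sin (b/2) * sin (b/2)))) by ring.
  rewrite Rabs_Ropp, Rabs_mult, Rabs_mult, (Rabs_pos_eq 2) by lra.
  pose proof (Rabs_pos (sin (b/2))).
  assert (Rabs (sin (b/2)) <= r).
  { apply Rabs_le. destruct (Rle_dec 0 b).
    - assert (0 <= b/2) by lra. rewrite Rabs_pos_eq in H0 by lra.
      pose proof (sin_lb1 (b/2) H3 ltac:(lra)).
      assert (sin (b/2) <= b/2).
      { destruct (Req_dec b 0) as [->|]. replace (0/2) with 0 by field. rewrite sin_0; lra.
        left; apply sin_lt_x; lra. }
      assert (0 <= (b/2)^3) by (apply pow_le; lra). nra.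
    - assert (0 <= -(b/2)) by lra. rewrite Rabs_left in H0 by lra.
      pose proof (sin_lb1 (-(b/2)) H3 ltac:(lra)).
      assert (sin (-(b/2)) <= -(b/2)).
      { left; apply sin_lt_x; lra. }
      rewrite sin_neg in H4, H5.
      assert (0 <= (-(b/2))^3) by (apply pow_le; lra). nra. }
  nra.
Qed.

Lemma exp_bounds a r : Rabs a <= r -> r <= 1/2 ->
  Rabs (exp a - 1 - a) <= 2 * r^2 /\ Rabs (exp a - 1) <= 2 * r /\ 0 < exp a <= 2.
Proof.
  intros Ha Hr.
  pose proof (exp_ineq1_le a) as H1. pose proof (exp_ineq1_le (-a)) as H2.
  pose proof (exp_pos a) as H3.
  assert (Hm : exp a * exp (-a) = 1) by (rewrite <- exp_plus; replace (a + - a) with 0 by ring; apply exp_0).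
  assert (Hab : -r <= a <= r) by (split; [pose proof (Rabs_maj2 a)|pose proof (Rle_abs a)]; lra).
  assert (H4 : exp a * (1 - a) <= 1).
  { rewrite <- Hm. apply Rmult_le_compat_l; lra. }
  assert (H5 : exp a <= 1 + a + 2 * a^2).
  { assert (0 <= a^2 * (1 - 2*a)) by (apply Rmult_le_pos; nra).
    assert ((1 + a + 2*a^2) * (1 - a) = 1 + a^2 * (1 - 2*a)) by ring.
    assert (1 <= (1 + a + 2*a^2) * (1 - a)) by lra.
    apply (Rmult_le_reg_r (1 - a)); lra. }
  assert (H6 : a^2 <= r^2) by nra.
  assert (H7 : 0 <= r) by (pose proof (Rabs_pos a); lra).
  assert (H8 : 2 * r^2 <= r) by nra.
  split; [|split; [|lra]].
  - apply Rabs_le; lra.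
  - apply Rabs_le; lra.
Qed.

Lemma Cmod_le_sum z : Cmod z <= Rabs (fst z) + Rabs (snd z).
Proof.
  unfold Cmod. rewrite <- (sqrt_pow2 (Rabs (fst z) + Rabs (snd z))) by
    (pose proof (Rabs_pos (fst z)); pose proof (Rabs_pos (snd z)); lra).
  apply sqrt_le_1_alt.
  rewrite <- (pow2_abs (fst z)), <- (pow2_abs (snd z)).
  pose proof (Rabs_pos (fst z)); pose proof (Rabs_pos (snd z)); nra.
Qed.

Lemma cexp_small h : Cmod h <= 1/2 -> Cmod (cexp h - 1 - h)%C <= 10 * Cmod h ^ 2.
Proof.
  intros Hh. destruct h as [a b]. set (r := Cmod (a, b)) in *.
  pose proof (Rmax_Cmod (a, b)) as Hm. simpl in Hm. fold r in Hm.
  assert (Ha : Rabs a <= r) by (eapply Rle_trans; [apply Rmax_l|exact Hm]).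
  assert (Hb : Rabs b <= r) by (eapply Rle_trans; [apply Rmax_r|exact Hm]).
  destruct (exp_bounds a r Ha Hh) as [E1 [E2 E3]].
  pose proof (cos_bound' b r Hb ltac:(lra)) as Cb.
  pose proof (sin_bound' b r Hb ltac:(lra)) as Sb.
  eapply Rle_trans; [apply Cmod_le_sum|].
  replace (fst (cexp (a, b) - 1 - (a, b))%C) with (exp a * (cos b - 1) + (exp a - 1 - a))
    by (unfold cexp; simpl; ring).
  replace (snd (cexp (a, b) - 1 - (a, b))%C) with (exp a * (sin b - b) + (exp a - 1) * b)
    by (unfold cexp; simpl; ring).
  pose proof (Rabs_triang (exp a * (cos b - 1)) (exp a - 1 - a)).
  pose proof (Rabs_triang (exp a * (sin b - b)) ((exp a - 1) * b)).
  rewrite Rabs_mult in H, H0. rewrite Rabs_mult in H0.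
  rewrite (Rabs_pos_eq (exp a)) in H, H0 by lra.
  assert (exp a * Rabs (cos b - 1) <= 2 * (2 * r^2)) by
    (apply Rmult_le_compat; try lra; apply Rabs_pos).
  assert (exp a * Rabs (sin b - b) <= 2 * r^2) by
    (apply Rmult_le_compat; try lra; apply Rabs_pos).
  assert (Rabs (exp a - 1) * Rabs b <= 2 * r * r) by
    (apply Rmult_le_compat; try lra; apply Rabs_pos).
  simpl in *. lra.
Qed.

Lemma cexp_derive z : C_is_derive cexp z (cexp z).
Proof.
  unfold C_is_derive, is_derive, filterdiff. split; [apply is_linear_scal_l|].
  intros x Hx. pose proof (@is_filter_lim_locally_unique C_AbsRing (AbsRing_NormedModule C_AbsRing) z x Hx) as Hzx. subst x.
  intros eps.
  set (M := Cmod (cexp z)).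
  assert (HM : 0 <= M) by apply Cmod_ge_0.
  pose proof (cond_pos eps) as He.
  assert (Hd : 0 < Rmin (1/2) (eps / (10 * (M + 1)))).
  { apply Rmin_glb_lt; [lra|]. apply Rdiv_lt_0_compat; lra. }
  exists (mkposreal _ Hd). intros y Hy.
  change (Cmod ((cexp y - cexp z) - (y - z) * cexp z)%C <= eps * Cmod (y - z)%C).
  change (Cmod (y - z)%C < Rmin (1 / 2) (eps / (10 * (M + 1)))) in Hy.
  set (h := (y - z)%C) in *.
  replace y with (z + h)%C by (unfold h; ring).
  rewrite cexp_add.
  replace (cexp z * cexp h - cexp z - h * cexp z)%C with (cexp z * (cexp h - 1 - h))%C by ring.
  rewrite Cmod_mult. fold M.
  set (r := Cmod h) in *.
  assert (Hr0 : 0 <= r) by apply Cmod_ge_0.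
  assert (Hr1 : r <= 1/2) by (pose proof (Rmin_l (1/2) (eps / (10 * (M + 1)))); lra).
  assert (Hr2 : r <= eps / (10 * (M + 1))) by (pose proof (Rmin_r (1/2) (eps / (10 * (M + 1)))); lra).
  pose proof (cexp_small h Hr1) as Hs. fold r in Hs.
  assert (Hq : eps / (10*(M+1)) * (10*(M+1)) = eps) by (field; lra).
  assert (Hr3 : r * (10*(M+1)) <= eps).
  { rewrite <- Hq. apply Rmult_le_compat_r; lra. }
  apply Rle_trans with (M * (10 * r ^ 2)).
  { apply Rmult_le_compat_l; lra. }
  nra.
Qed.

From Stdlib Require Import FunctionalExtensionality.

Lemma cexp_nz z : cexp z <> 0%C.
Proof.
  intros H. unfold cexp in H. injection H as H1 H2.
  pose proof (exp_pos (fst z)).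
  assert (cos (snd z) = 0) by (apply (Rmult_eq_reg_l (exp (fst z))); lra).
  assert (sin (snd z) = 0) by (apply (Rmult_eq_reg_l (exp (fst z))); lra).
  pose proof (sin2_cos2 (snd z)). rewrite H0, H3 in H4. unfold Rsqr in H4. lra.
Qed.

Lemma cexp_period z : cexp (z + (0%R, (2 * PI)%R))%C = cexp z.
Proof.
  rewrite cexp_add.
  replace (cexp (0%R, (2 * PI)%R)) with (RtoC 1).
  - apply Cmult_1_r.
  - unfold cexp; simpl. rewrite exp_0, cos_2PI, sin_2PI. unfold RtoC. f_equal; ring.
Qed.

Lemma lin_deriv c z : C_is_derive (fun t => (t + c)%C) z (RtoC 1).
Proof.
  unfold C_is_derive, is_derive, filterdiff. split; [apply is_linear_scal_l|].
  intros x Hx eps. exists eps. intros y _.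
  change (Cmod ((y + c - (x + c)) - (y - x) * 1)%C <= eps * Cmod (y - x)%C).
  assert (E : forall a b : C, ((a + c - (b + c)) - (a - b) * 1 = 0)%C) by (intros; ring).
  rewrite (E y x), Cmod_0. apply Rmult_le_pos; [left; apply cond_pos | apply Cmod_ge_0].
Qed.

Lemma id_deriv z : C_is_derive (fun t => t) z (RtoC 1).
Proof.
  unfold C_is_derive. apply (is_derive_ext (fun t => (t + 0)%C)).
  - intros t. apply Cplus_0_r.
  - apply lin_deriv.
Qed.

Theorem proposition3p14 :
  exists f : C -> C, elh f /\
    exists g1 g2 : C -> C, elh g1 /\ elh g2 /\ g1 <> g2 /\
      (fun z => f (g1 z)) = (fun z => f (g2 z)).
Proof.
  assert (Hf : forall z, C_is_derive (fun z => (cexp z - 1)%C) z (cexp z)).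
  { intros z. unfold C_is_derive.
    pose proof (@is_derive_minus C_AbsRing C_NormedModule cexp (fun _ => RtoC 1) z (cexp z) zero
      (cexp_derive z) (is_derive_const _ _)) as H.
    match type of H with is_derive _ _ ?l => replace l with (cexp z) in H end.
    - exact H.
    - destruct (cexp z) as [u v]. unfold minus, zero, plus, opp; simpl.
      unfold Cplus, Copp; simpl. apply injective_projections; simpl; ring. }
  exists (fun z => (cexp z - 1)%C). split.
  { split.
    - intros z. exists (cexp z). split; [apply Hf|apply cexp_nz].
    - assert (E0 : cexp 0%C = RtoC 1).
      { unfold cexp; simpl. rewrite exp_0, cos_0, sin_0. unfold RtoC. f_equal; ring. }
      pose proof (Hf 0%C) as H0. rewrite E0 in H0. exact H0. }
  exists (fun z => z), (fun z => (z + (0%R, (2 * PI)%R))%C).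
  assert (H1 : (RtoC 1) <> 0%C).
  { intros H. injection H. lra. }
  split; [|split; [|split]].
  - split.
    + intros z. exists (RtoC 1). split; [|exact H1]. apply id_deriv.
    + apply id_deriv.
  - pose proof (lin_deriv (0%R, (2 * PI)%R)) as Hg.
    split.
    + intros z. exists (RtoC 1). split; [apply Hg|exact H1].
    + apply Hg.
  - intros H. pose proof (f_equal (fun g : C -> C => snd (g (RtoC 0))) H) as H2. simpl in H2.
    pose proof PI_RGT_0. lra.
  - apply functional_extensionality. intros z. rewrite cexp_period. reflexivity.
Qed.
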